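(* Let $\delta>0$, let $X$ be a geodesic $\delta$--hyperbolic space, and let the group $G$ act $(\kappa_0,N_0)$--acylindrically on $X$ with $\kappa_0\geqslant\delta$; put $\rho_0:=\delta/N_0$ and $c:=\frac1{10^6}\cdot\frac{\rho_0}{\kappa_0}$. Let $U\subset G$ be finite, let $x_0\in X$ be a point with $\frac1{|U|}\sum_{u\in U}|ux_0-x_0|\leqslant E(U)+\delta$, let $U_1:=\{u\in U\mid|ux_0-x_0|\leqslant\kappa_0\}$ and $\lambda_0(U):=\max_{u\in U}|ux_0-x_0|$. If $|U_1|\geqslant\frac14|U|$ and $\lambda_0(U)\geqslant10^4\kappa_0$, then for all natural numbers $n\geqslant1$, $$|U^n|\geqslant\left(\frac c4|U|\right)^{[(n+1)/2]}.$$
   Context: Distance $|x-y|$; Gromov product $(p,q)_x=\frac12(|p-x|+|q-x|-|p-q|)$; $X$ is $\delta$--hyperbolic if $(p,r)_x\geqslant\min\{(p,q)_x,(q,r)_x\}-\delta$ for all $p,q,r,x$. The action is $(\kappa_0,N_0)$--acylindrical ($N_0\geqslant1$) if for all $x,y$ with $|x-y|\geqslant\kappa_0$ at most $N_0$ elements $g\in G$ satisfy $|gx-x|\leqslant100\delta$ and $|gy-y|\leqslant100\delta$. $E(U):=\inf_{x\in X}\frac1{|U|}\sum_{u\in U}|ux-x|$. $U^n$ is the set of products of $n$ elements of $U$; $[x]$ is the integral part. *)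

(* Defs.v *)
From HB Require Import structures.
From mathcomp Require Import all_boot all_order all_algebra.
From mathcomp Require Import boolp classical_sets reals.
Set Implicit Arguments. Unset Strict Implicit. Unset Printing Implicit Defensive.
Import Order.TTheory GRing.Theory Num.Theory.
Local Open Scope ring_scope.

Definition is_group (G : Type) (mul : G -> G -> G) (one : G) (inv : G -> G) : Prop :=
  [/\ (forall a b c, mul a (mul b c) = mul (mul a b) c),
      (forall a, mul one a = a),
      (forall a, mul a one = a),
      (forall a, mul (inv a) a = one) &
      (forall a, mul a (inv a) = one)].

Definition is_metric (R : realType) (X : Type) (d : X -> X -> R) : Prop :=
  [/\ (forall x y, 0 <= d x y),
      (forall x y, d x y = 0 <-> x = y),
      (forall x y, d x y = d y x) &
      (forall x y z, d x z <= d x y + d y z)].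

Definition is_geodesic (R : realType) (X : Type) (d : X -> X -> R) : Prop :=
  forall x y, exists gam : R -> X,
    [/\ gam 0 = x, gam (d x y) = y &
        (forall s t, 0 <= s <= d x y -> 0 <= t <= d x y ->
           d (gam s) (gam t) = `|s - t|)].

Definition gromov (R : realType) (X : Type) (d : X -> X -> R) (p q x : X) : R :=
  (d p x + d q x - d p q) / 2.

Definition is_hyperbolic (R : realType) (X : Type) (d : X -> X -> R) (delta : R) : Prop :=
  forall p q r x,
    Num.min (gromov d p q x) (gromov d q r x) - delta <= gromov d p r x.

Definition is_isometric_action (R : realType) (G X : Type)
  (mul : G -> G -> G) (one : G) (d : X -> X -> R) (act : G -> X -> X) : Prop :=
  [/\ (forall x, act one x = x),
      (forall g h x, act (mul g h) x = act g (act h x)) &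
      (forall g x y, d (act g x) (act g y) = d x y)].

(* (kappa0, N0)-acylindrical: for |x-y| >= kappa0, at most N0 elements g
   satisfy |gx - x| <= 100 delta and |gy - y| <= 100 delta
   (i.e. every duplicate-free list of such elements has length <= N0). *)
Definition is_acylindrical (R : realType) (G : eqType) (X : Type)
  (d : X -> X -> R) (act : G -> X -> X) (delta kappa0 : R) (N0 : nat) : Prop :=
  forall x y, kappa0 <= d x y ->
    forall s : seq G, uniq s ->
      (forall g, g \in s -> d (act g x) x <= 100 * delta /\ d (act g y) y <= 100 * delta) ->
      (size s <= N0)%N.

Fixpoint powseq (G : eqType) (mul : G -> G -> G) (one : G) (U : seq G) (n : nat) : seq G :=
  match n with
  | 0 => [:: one]
  | n'.+1 => undup [seq mul u g | u <- U, g <- powseq mul one U n']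
  end.

Definition avg_disp (R : realType) (G X : Type) (d : X -> X -> R) (act : G -> X -> X)
  (U : seq G) (x : X) : R :=
  (\sum_(u <- U) d (act u x) x) / (size U)%:R.

Definition energy (R : realType) (G X : Type) (d : X -> X -> R) (act : G -> X -> X)
  (U : seq G) : R :=
  inf (range (avg_disp d act U)).

Definition lambda0 (R : realType) (G X : Type) (d : X -> X -> R) (act : G -> X -> X)
  (U : seq G) (x0 : X) : R :=
  \big[Num.max/0]_(u <- U) d (act u x0) x0.

(* Main.v *)
Require Import Defs.
From HB Require Import structures.
From mathcomp Require Import all_boot all_order all_algebra.
From mathcomp Require Import boolp classical_sets reals.
From mathcomp Require Import ring lra zify.
Import Order.TTheory GRing.Theory Num.Theory.
Local Open Scope ring_scope.

Section Geo.
Variable R : realType.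
Variable X : Type.
Variable d : X -> X -> R.
Variable delta : R.
Hypothesis Hm : is_metric d.
Hypothesis Hh : is_hyperbolic d delta.
Hypothesis Hd : 0 <= delta.

Lemma dge0 x y : 0 <= d x y. Proof. by case: Hm. Qed.
Lemma dxx x : d x x = 0. Proof. by case: Hm => _ h _ _; apply/h. Qed.
Lemma dsym x y : d x y = d y x. Proof. by case: Hm. Qed.
Lemma dtri x y z : d x z <= d x y + d y z. Proof. by case: Hm. Qed.

Local Notation gp := (gromov d).

Lemma gpE p q x : gp p q x = (d p x + d q x - d p q) / 2.
Proof. by []. Qed.

Lemma hypmin p q r x a : a <= gp p q x -> a <= gp q r x -> a - delta <= gp p r x.
Proof.
move=> h1 h2; have := Hh p q r x.
have : a <= Num.min (gp p q x) (gp q r x) by rewrite le_min h1 h2.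
move=> h3 h4; lra.
Qed.

Lemma near_geod (x0 y p : X) (gam : R -> X) :
  gam 0 = x0 -> gam (d x0 y) = y ->
  (forall s t, 0 <= s <= d x0 y -> 0 <= t <= d x0 y -> d (gam s) (gam t) = `|s - t|) ->
  let t := gp p y x0 in
  [/\ 0 <= t <= d x0 y & d p (gam t) <= gp x0 y p + 2 * delta].
Proof.
move=> g0 gl giso t.
have tri1 := dtri p x0 y; have tri2 := dtri x0 p y; have tri3 := dtri p y x0.
have e1 := dsym p x0; have e2 := dsym y x0; have e3 := dsym y p.
have ht : 0 <= t <= d x0 y.
  rewrite /t gpE; apply/andP; split; lra.
split => //.
have hA : d x0 (gam t) = t.
  case/andP: ht => ht0 ht1.
  have := giso 0 t; rewrite g0 sub0r normrN ger0_norm // => -> //.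
  by rewrite lexx dge0.
  by rewrite ht0 ht1.
have hB : d (gam t) y = d x0 y - t.
  case/andP: ht => ht0 ht1.
  have := giso t (d x0 y); rewrite gl distrC ger0_norm ?subr_ge0 // => -> //.
  by rewrite ht0 ht1.
  by rewrite lexx dge0.
have h1 : t <= gp p y x0 by rewrite /t lexx.
have h2 : t <= gp y (gam t) x0 by rewrite gpE (dsym y (gam t)) hB (dsym (gam t)) hA; lra.
have := @hypmin p y (gam t) x0 t h1 h2.
rewrite !gpE (dsym (gam t) x0) hA (dsym p (gam t)).
rewrite /t gpE in h1 h2 *.
lra.
Qed.

Lemma gp_ge0 p q x : 0 <= gp p q x.
Proof. have := dtri p x q; rewrite gpE (dsym x q); lra. Qed.

Lemma gp_le p q x : gp p q x <= d p x.
Proof. have := dtri q p x; rewrite gpE (dsym q p); lra. Qed.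

Lemma e_small (x0 y gx0 gy p : X) a0 R1 lam r :
  d x0 y = lam -> d gx0 gy = lam -> d gx0 p = r -> d p gy = lam - r ->
  d gx0 x0 <= a0 -> R1 <= gp gy y x0 -> a0 + 2 * delta < r ->
  r < R1 - a0 - 2 * delta -> gp x0 y p <= 2 * delta.
Proof.
move=> h1 h2 h3 h4 h5 h6 h7 h8.
rewrite leNgt; apply/negP => he.
set e := gp x0 y p in he.
set m := Num.min e (Num.min (R1 - r - a0) (r - a0)).
have m1 : m <= e by rewrite /m ge_min lexx.
have m2 : m <= R1 - r - a0 by rewrite /m !ge_min lexx orbT.
have m3 : m <= r - a0 by rewrite /m !ge_min lexx !orbT.
have m4 : 2 * delta < m by rewrite /m !lt_min he /=; apply/andP; split; lra.
have hyg : m <= gp y gy p.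
  have := dtri y p x0; have := dtri p gx0 x0; have := dtri gy gx0 x0.
  have := dsym y x0; have := dsym p gx0; have := dsym gy gx0; have := dsym y gy;
  have := dsym gy p.
  rewrite !gpE in h6 *; lra.
have := @hypmin x0 y gy p m m1 hyg => hh.
have hgx : m - delta <= gp gx0 x0 p.
  have := dtri gx0 x0 p; have := Hd; rewrite gpE; lra.
have := @hypmin gx0 x0 gy p (m - delta) hgx hh.
have := dsym gy p; rewrite gpE; lra.
Qed.

End Geo.

Arguments hypmin [R X d delta] Hh [p q r x a].
Arguments e_small [R X d delta] Hm Hh Hd [x0 y gx0 gy p a0 R1 lam r].

Arguments dge0 {R X d}.
Arguments dxx {R X d}.
Arguments dsym {R X d}.
Arguments dtri {R X d}.
Arguments gp_ge0 {R X d}.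
Arguments gp_le {R X d}.
Arguments near_geod {R X d delta}.

Lemma absle (R : realType) (x c : R) : -c <= x -> x <= c -> `|x| <= c.
Proof. by move=> h1 h2; rewrite ler_norml h1 h2. Qed.

Lemma pigeon (T : eqType) (b : T -> nat) (B N : nat) (s : seq T) :
 (forall x, x \in s -> (b x < B)%N) ->
 (forall i, (size [seq x <- s | b x == i] <= N)%N) -> (size s <= B * N)%N.
Proof.
elim: B s => [|B IH] s hb hi.
  by case: s hb hi => [|x s] hb _ //; have := hb x (mem_head _ _).
have := count_predC (fun x => b x == B) s; rewrite -!size_filter.
set s2 := filter (predC _) s => hs.
have h1 : (size s2 <= B * N)%N.
  apply: IH.
    move=> x; rewrite mem_filter /= => /andP[hx1 hx2]; have := hb x hx2; lia.
  move=> i; rewrite -filter_predI size_filter (leq_trans _ (hi i)) // size_filter.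
  by apply: sub_count => x /= /andP[].
have h2 := hi B.
rewrite mulSn -hs; exact: leq_add.
Qed.
Lemma trunc_close (R : realType) (x x' : R) : 0 <= x -> 0 <= x' ->
  Num.trunc x = Num.trunc x' -> x - x' < 1.
Proof.
move=> h h' e.
have a := truncnS_gt x; have b : (Num.trunc x')%:R <= x' by rewrite truncn_le.
rewrite e -natr1 in a; lra.
Qed.

Lemma greedy (T : eqType) (conf : T -> T -> bool) (M : nat) (l : seq T) :
  uniq l -> (forall x y, conf x y = conf y x) -> (forall x, conf x x) ->
  (forall x, x \in l -> (size (filter (conf x) l) <= M)%N) ->
  exists T' : seq T, [/\ uniq T', {subset T' <= l},
    (forall x y, x \in T' -> y \in T' -> x != y -> ~~ conf x y) &
    (size l <= size T' * M)%N].
Proof.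
move=> + csym crefl.
move: {2}(size l) (leqnn (size l)) => n; elim: n l => [|n IH] l.
  by case: l => // _ _ _; exists [::]; split.
case: l => [|x l'] hs hu hb; first by exists [::]; split.
set rest := filter (fun y => ~~ conf x y) l'.
have hrs : (size rest <= n)%N.
  by rewrite size_filter; apply: leq_trans (count_size _ _) _; move: hs => /=.
case/andP: hu => hx hu'.
have [T'' [u1 u2 u3 u4]] : exists T'' : seq T, [/\ uniq T'', {subset T'' <= rest},
    (forall x y, x \in T'' -> y \in T'' -> x != y -> ~~ conf x y) &
    (size rest <= size T'' * M)%N].
  apply: IH hrs _ _; first exact: filter_uniq.
  move=> y; rewrite mem_filter => /andP[hy1 hy2].
  apply: leq_trans (hb y _); last by rewrite inE hy2 orbT.
  rewrite !size_filter count_filter /=.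
  apply: leq_trans (leq_addl (conf y x) _).
  by apply: sub_count => z /andP[].
have hxT : x \notin T''.
  by apply/negP => /u2; rewrite mem_filter crefl.
exists (x :: T''); split.
- by rewrite /= hxT u1.
- move=> z; rewrite inE => /orP[/eqP -> | /u2]; first by rewrite mem_head.
  by rewrite mem_filter => /andP[_ h]; rewrite inE h orbT.
- move=> a b; rewrite !inE => /orP[/eqP -> | ha] /orP[/eqP -> | hb'] hab.
  + by rewrite eqxx in hab.
  + by move: (u2 _ hb'); rewrite mem_filter => /andP[].
  + by move: (u2 _ ha); rewrite mem_filter csym => /andP[].
  + exact: u3.
have hcx := hb x (mem_head _ _).
rewrite size_filter /= crefl in hcx.
have := count_predC (conf x) l'.
rewrite -/(size [seq y <- l' | predC (conf x) y]) => hc.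
have e : size rest = count (predC (conf x)) l' by rewrite size_filter.
rewrite /= mulSn; lia.
Qed.

Lemma khalf1 n : (1 <= n)%N -> (1 <= (n.+1)./2)%N.
Proof. by case: n. Qed.

Lemma bigmax_witness (R : realType) (T : eqType) (F : T -> R) (U : seq T) (c : R) :
  0 < c -> c <= \big[Num.max/0]_(u <- U) F u -> exists2 u, u \in U & c <= F u.
Proof.
move=> hc; elim: U => [|u U IH]; first by rewrite big_nil => h; lra.
rewrite big_cons le_max => /orP[h|h]; first by exists u; rewrite ?mem_head.
by have [v hv hv'] := IH h; exists v; rewrite // inE hv orbT.
Qed.
Lemma t10 (R : realType) : 100 <= (10:R) ^+ 4 /\ 10 <= (10:R) ^+ 6.
Proof. rewrite !exprS expr0; split; lra. Qed.
Lemma khalf n : (odd n -> n = (2 * (n.+1)./2).-1) /\ (~~ odd n -> n = 2 * (n.+1)./2)%N.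
Proof.
have e := odd_double_half n.
have e2 : (n.+1)./2 = (odd n + n./2)%N by rewrite /= uphalf_half.
rewrite e2 -mul2n in e *; case: (odd n) e => /= e; split => // _; lia.
Qed.

Lemma final_arith (R : realType) (delta kappa0 : R) (N0 : nat) (Ur U1r Tr Mr : R) :
  0 < delta -> delta <= kappa0 -> (1 <= N0)%N -> 0 <= Ur -> Ur / 4 <= U1r ->
  U1r <= Mr + Tr * Mr -> 0 <= Mr ->
  Mr <= (2 * (2 * kappa0) / (10 * delta) + 1) * N0%:R ->
  0 <= (1 / 10 ^+ 6 * (delta / N0%:R / kappa0)) / 4 * Ur /\
  ((1 / 10 ^+ 6 * (delta / N0%:R / kappa0)) / 4 * Ur <= 1 \/
   (1 / 10 ^+ 6 * (delta / N0%:R / kappa0)) / 4 * Ur <= Tr).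
Proof.
move=> hd hdk hN hUr hU1r hU1R hMr hM.
have hk0 : 0 < kappa0 by lra.
have hNr : 1 <= N0%:R :> R by rewrite ler1n.
set q := 2 * (2 * kappa0) / (10 * delta) in hM.
have hq0 : 0 <= q by rewrite /q; apply: divr_ge0; lra.
set c := 1 / 10 ^+ 6 * (delta / N0%:R / kappa0).
set b := c / 4 * Ur.
have hK0 : (10:R) <= 10 ^+ 6 by rewrite !exprS expr0; lra.
have hc0 : 0 <= c.
  rewrite /c; apply: mulr_ge0; first by apply: divr_ge0; lra.
  by apply: divr_ge0; [apply: divr_ge0|]; lra.
have hcM : c * Mr <= 14 / 100.
  apply: le_trans (ler_wpM2l hc0 hM) _.
  have -> : c * ((q + 1) * N0%:R) = (4 / 10 + delta / kappa0) / 10 ^+ 6.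
    rewrite /c /q; field.
    rewrite pnatr_eq0 -lt0n hN andbT; apply/andP; split; apply/eqP; lra.
  have hdk' : delta / kappa0 <= 1 by rewrite ler_pdivrMr // mul1r.
  rewrite ler_pdivrMr; lra.
have hb0 : 0 <= b by rewrite /b; apply: mulr_ge0; [apply: divr_ge0|]; lra.
split => //.
case: (lerP b 1) => hb1; [by left | right].
rewrite leNgt; apply/negP => hc.
have e1 : Tr * Mr <= b * Mr by apply: ler_wpM2r => //; apply: ltW.
have e2 : b * Mr = (c * Mr) * Ur / 4 by rewrite /b; ring.
have e3 : (c * Mr) * Ur <= 14 / 100 * Ur by apply: ler_wpM2r.
have e4 : 86 / 100 * Ur / 4 <= Mr by lra.
have e5 := ler_wpM2l hc0 e4.
have e6 : c * (86 / 100 * Ur / 4) = 86 / 100 * b by rewrite /b; ring.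
lra.
Qed.

Section Act.
Variables (R : realType) (G : eqType) (X : Type).
Variables (mul : G -> G -> G) (one : G) (inv : G -> G).
Variables (d : X -> X -> R) (act : G -> X -> X) (delta kappa0 : R) (N0 : nat).
Hypothesis Hg : is_group mul one inv.
Hypothesis Hm : is_metric d.
Hypothesis Hh : is_hyperbolic d delta.
Hypothesis Hd : 0 < delta.
Hypothesis Ha : is_isometric_action mul one d act.
Hypothesis Hac : is_acylindrical d act delta kappa0 N0.

Local Notation gp := (gromov d).
Let Hd0 : 0 <= delta. Proof. exact: ltW. Qed.

Lemma act_mul g h x : act (mul g h) x = act g (act h x). Proof. by case: Ha. Qed.
Lemma act_one x : act one x = x. Proof. by case: Ha. Qed.
Lemma dact g x y : d (act g x) (act g y) = d x y. Proof. by case: Ha. Qed.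
Lemma mulA a b c : mul a (mul b c) = mul (mul a b) c. Proof. by case: Hg. Qed.
Lemma mul1g a : mul one a = a. Proof. by case: Hg. Qed.
Lemma mulg1 a : mul a one = a. Proof. by case: Hg. Qed.
Lemma mulVg a : mul (inv a) a = one. Proof. by case: Hg. Qed.
Lemma mulgV a : mul a (inv a) = one. Proof. by case: Hg. Qed.
Lemma act_invK g x : act (inv g) (act g x) = x.
Proof. by rewrite -act_mul mulVg act_one. Qed.
Lemma act_Kinv g x : act g (act (inv g) x) = x.
Proof. by rewrite -act_mul mulgV act_one. Qed.
Lemma mul_canl a b c : mul a b = mul a c -> b = c.
Proof. by move=> h; rewrite -(mul1g b) -(mul1g c) -(mulVg a) -!mulA h. Qed.
Lemma mul_canr a b c : mul b a = mul c a -> b = c.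
Proof. by move=> h; rewrite -(mulg1 b) -(mulg1 c) -(mulgV a) !mulA h. Qed.

Section Bin.
Variables (x0 y : X) (gam : R -> X) (a0 R1 : R).
Hypothesis g0 : gam 0 = x0.
Hypothesis gl : gam (d x0 y) = y.
Hypothesis giso : forall s t, 0 <= s <= d x0 y -> 0 <= t <= d x0 y ->
  d (gam s) (gam t) = `|s - t|.
Hypothesis ha0 : 0 <= a0.

Definition good g := d (act g x0) x0 <= a0 /\ R1 <= gp (act g y) y x0.

Lemma gam_x0 r : 0 <= r <= d x0 y -> d x0 (gam r) = r.
Proof.
move=> hr; have h0 : (0:R) <= 0 <= d x0 y by rewrite lexx (dge0 Hm).
have := giso 0 r h0 hr; rewrite g0 sub0r normrN => ->.
by case/andP: hr => ? _; rewrite ger0_norm.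
Qed.

Lemma gam_y r : 0 <= r <= d x0 y -> d (gam r) y = d x0 y - r.
Proof.
move=> hr; have h0 : 0 <= d x0 y <= d x0 y by rewrite lexx (dge0 Hm).
have := giso r (d x0 y) hr h0; rewrite gl distrC => ->.
by case/andP: hr => _ ?; rewrite ger0_norm // subr_ge0.
Qed.

Lemma gprops g r : good g -> a0 + 2 * delta < r -> r < R1 - a0 - 2 * delta ->
  r <= d x0 y ->
  let p := act g (gam r) in let t := gp p y x0 in
  [/\ 0 <= t <= d x0 y, d p (gam t) <= 4 * delta, d x0 p - 2 * delta <= t,
      t <= d x0 p & (r - a0 <= d x0 p) && (d x0 p <= r + a0)].
Proof.
move=> [hg1 hg2] hr1 hr2 hr3 p t; have hd := Hd0.
have hr : 0 <= r <= d x0 y.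
  apply/andP; split => //. move: hr1 ha0 hd. lra.
have [ht hn] := near_geod Hm Hh x0 y p gam g0 gl giso.
have he : gp x0 y p <= 2 * delta.
  apply: (e_small Hm Hh Hd0 (gx0 := act g x0) (gy := act g y) (lam := d x0 y) (r := r) (a0 := a0) (R1 := R1)) => //.
  - by rewrite dact.
  - by rewrite /p dact gam_x0.
  - by rewrite /p dact gam_y.
have hsum : t + gp x0 y p = d x0 p.
  rewrite /t !gpE; have := dsym Hm p x0; have := dsym Hm y p; have := dsym Hm y x0; lra.
have := gp_ge0 Hm x0 y p => he0.
have hpx : r - a0 <= d x0 p <= r + a0.
  have := dtri Hm x0 (act g x0) p; have := dtri Hm (act g x0) x0 p.
  have := dsym Hm x0 (act g x0).
  have : d (act g x0) p = r by rewrite /p dact gam_x0.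
  move=> *; apply/andP; split; lra.
split => //; lra.
Qed.

Definition r1 := a0 + 3 * delta.
Definition Dd := 2 * a0 + 11 * delta.
Definition r2 := r1 + Dd.
Hypothesis hR1 : r2 < R1 - a0 - 2 * delta.
Hypothesis hlam : r2 <= d x0 y.

Lemma giso' s t : 0 <= s <= d x0 y -> 0 <= t <= d x0 y -> s <= t ->
  d (gam s) (gam t) = t - s.
Proof. by move=> h1 h2 h3; rewrite giso // distrC ger0_norm // subr_ge0. Qed.

Lemma key g : good g ->
  let t1 := gp (act g (gam r1)) y x0 in let t2 := gp (act g (gam r2)) y x0 in
  [/\ Dd - 8 * delta <= t2 - t1 <= Dd + 8 * delta,
      0 <= t1 <= d x0 y, 0 <= t2 <= d x0 y,
      d (act g (gam r1)) (gam t1) <= 4 * delta /\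
      d (act g (gam r2)) (gam t2) <= 4 * delta &
      (d x0 (act g (gam r1)) - 2 * delta <= t1) && (t1 <= d x0 (act g (gam r1)))].
Proof.
move=> hg t1 t2; have hd := Hd0.
have hd1 : 0 < delta := Hd.
have ha1 : 0 <= a0 := ha0.
have hR1' : r2 < R1 - a0 - 2 * delta := hR1.
have hlam' : r2 <= d x0 y := hlam.
have hr2e : r2 = r1 + Dd by [].
have hDe : Dd = 2 * a0 + 11 * delta by [].
have hr1e : r1 = a0 + 3 * delta by [].
have e1 : a0 + 2 * delta < r1 by rewrite /r1; lra.
have e2 : r1 < R1 - a0 - 2 * delta by move: hR1'; rewrite /r2 /Dd; lra.
have e3 : r1 <= d x0 y by move: hlam'; rewrite /r2 /Dd; lra.
have e4 : a0 + 2 * delta < r2 by rewrite /r2 /r1 /Dd; lra.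
have [ht1 hn1 hl1 hu1 /andP[hp1 hp1']] := gprops g r1 hg e1 e2 e3.
have [ht2 hn2 hl2 hu2 /andP[hp2 hp2']] := gprops g r2 hg e4 hR1 hlam.
rewrite -/t1 in ht1 hn1 hl1 hu1; rewrite -/t2 in ht2 hn2 hl2 hu2.
have hpp : d (act g (gam r1)) (act g (gam r2)) = Dd.
  rewrite dact giso'; first by rewrite /r2; lra.
  - by apply/andP; split; lra.
  - by apply/andP; split; lra.
  - by rewrite /r2 /Dd; lra.
have htt : t1 <= t2 by lra.
have hgt : d (gam t1) (gam t2) = t2 - t1 by apply: giso'.
have := dtri Hm (act g (gam r1)) (gam t1) (act g (gam r2)).
have := dtri Hm (gam t1) (gam t2) (act g (gam r2)).
have := dtri Hm (gam t1) (act g (gam r1)) (gam t2).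
have := dtri Hm (act g (gam r1)) (act g (gam r2)) (gam t2).
have := dsym Hm (gam t1) (act g (gam r1)).
have := dsym Hm (gam t2) (act g (gam r2)).
move=> *; split => //; try split; try (apply/andP; split); lra.
Qed.

Lemma pair_close g g' : good g -> good g' ->
  `|d x0 (act g (gam r1)) - d x0 (act g' (gam r1))| < 10 * delta ->
  d (act g (gam r1)) (act g' (gam r1)) <= 36 * delta /\ d (act g (gam r2)) (act g' (gam r2)) <= 36 * delta.
Proof.
move=> hg hg'; rewrite ltr_norml => /andP[hv1 hv2]; have hd : 0 < delta := Hd.
have [/andP[k1 k2] ht1 ht2 [hn1 hn2] /andP[l1 l2]] := key g hg.
have [/andP[k1' k2'] ht1' ht2' [hn1' hn2'] /andP[l1' l2']] := key g' hg'.
set t1 := gp (act g (gam r1)) y x0 in k1 k2 ht1 hn1 l1 l2.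
set t2 := gp (act g (gam r2)) y x0 in k1 k2 ht2 hn2.
set t1' := gp (act g' (gam r1)) y x0 in k1' k2' ht1' hn1' l1' l2'.
set t2' := gp (act g' (gam r2)) y x0 in k1' k2' ht2' hn2'.
have a1 : d (gam t1) (gam t1') <= 12 * delta.
  rewrite giso //; apply: absle; lra.
have a2 : d (gam t2) (gam t2') <= 28 * delta.
  rewrite giso //; apply: absle; lra.
have := dtri Hm (act g (gam r1)) (gam t1) (act g' (gam r1)).
have := dtri Hm (gam t1) (gam t1') (act g' (gam r1)).
have := dsym Hm (gam t1') (act g' (gam r1)).
have := dtri Hm (act g (gam r2)) (gam t2) (act g' (gam r2)).
have := dtri Hm (gam t2) (gam t2') (act g' (gam r2)).
have := dsym Hm (gam t2') (act g' (gam r2)).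
move=> *; split; lra.
Qed.

Lemma r1_ok : [/\ a0 + 2 * delta < r1, r1 < R1 - a0 - 2 * delta & r1 <= d x0 y].
Proof.
have hd1 : 0 < delta := Hd.
have ha1 : 0 <= a0 := ha0.
have hR1' : r2 < R1 - a0 - 2 * delta := hR1.
have hlam' : r2 <= d x0 y := hlam.
have hr2e : r2 = r1 + Dd by [].
have hDe : Dd = 2 * a0 + 11 * delta by [].
have hr1e : r1 = a0 + 3 * delta by [].
split; lra.
Qed.

Lemma bin_bound (gs : seq G) : kappa0 <= Dd -> uniq gs ->
  (forall g, g \in gs -> good g) ->
  (size gs <= (Num.trunc (2 * a0 / (10 * delta))).+1 * N0)%N.
Proof.
move=> hk hu hgs.
have hd : 0 < delta := Hd.
have ha1 : 0 <= a0 := ha0.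
have [e1 e2 e3] := r1_ok.
set z := 10 * delta; have hz : 0 < z by rewrite /z; lra.
pose v g := d x0 (act g (gam r1)) - (r1 - a0).
have vr : forall g, good g -> 0 <= v g <= 2 * a0.
  move=> g hg; have [_ _ _ _ /andP[p1 p2]] := gprops g r1 hg e1 e2 e3.
  rewrite /v; apply/andP; split; lra.
pose b g := Num.trunc (v g / z).
apply: (@pigeon _ b).
  move=> g hg; rewrite ltnS; apply: le_truncn; rewrite ler_pM2r ?invr_gt0 //.
  by case/andP: (vr g (hgs g hg)).
move=> i; set l := filter _ gs.
case hl: l => [|k0 l'] //=.
have k0in : k0 \in l by rewrite hl mem_head.
have lprop : forall g, g \in l -> good g /\ b g = i.
  move=> g; rewrite mem_filter => /andP[/eqP h1 h2]; split => //; exact: hgs.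
have [hk0 hbk0] := lprop k0 k0in.
have -> : (size l').+1 = size [seq mul (inv k0) g | g <- l] by rewrite size_map hl.
apply: (Hac (gam r1) (gam r2)).
- rewrite giso'.
  + by rewrite /r2; lra.
  + by apply/andP; split; lra.
  + by apply/andP; split; move: hlam; rewrite /r2 /Dd; lra.
  + by rewrite /r2 /Dd; lra.
- by rewrite map_inj_uniq ?filter_uniq //; apply: mul_canl.
move=> h /mapP[g hgl ->].
have [hg hbg] := lprop g hgl.
have E : forall q, d (act (mul (inv k0) g) q) q = d (act g q) (act k0 q).
  by move=> q; have := dact (inv k0) (act g q) (act k0 q); rewrite act_invK act_mul => <-.
rewrite !E.
have hv : `|d x0 (act g (gam r1)) - d x0 (act k0 (gam r1))| < 10 * delta.
  have t1 : v g / z - v k0 / z < 1.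
    apply: trunc_close.
    - by apply: divr_ge0; [case/andP: (vr g hg) | exact: ltW].
    - by apply: divr_ge0; [case/andP: (vr k0 hk0) | exact: ltW].
    - by move: hbg hbk0; rewrite /b => -> ->.
  have t2 : v k0 / z - v g / z < 1.
    apply: trunc_close.
    - by apply: divr_ge0; [case/andP: (vr k0 hk0) | exact: ltW].
    - by apply: divr_ge0; [case/andP: (vr g hg) | exact: ltW].
    - by move: hbg hbk0; rewrite /b => -> ->.
  rewrite -mulrBl ltr_pdivrMr // mul1r in t1.
  rewrite -mulrBl ltr_pdivrMr // mul1r in t2.
  rewrite ltr_norml; move: t1 t2; rewrite /v /z => ??; apply/andP; split; lra.
have [c1 c2] := pair_close g k0 hg hk0 hv.
split; lra.
Qed.

End Bin.
Lemma gp_act g p q x : gp (act g p) (act g q) (act g x) = gp p q x.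
Proof. by rewrite !gpE !dact. Qed.

Lemma gp_sym p q x : gp p q x = gp q p x.
Proof. by rewrite !gpE (dsym Hm p q) (addrC (d p x)). Qed.

Lemma gp_base p q x x' : gp p q x - d x x' <= gp p q x'.
Proof.
rewrite !gpE; have := dtri Hm p x' x; have := dtri Hm q x' x; have := dsym Hm x x'; lra.
Qed.

Lemma dir_bound (x0 y z : X) (gam : R -> X) (ts : seq G) :
  gam 0 = x0 -> gam (d x0 y) = y ->
  (forall s t, 0 <= s <= d x0 y -> 0 <= t <= d x0 y -> d (gam s) (gam t) = `|s - t|) ->
  delta <= kappa0 -> 100 * kappa0 <= d x0 y -> uniq ts ->
  (forall t, t \in ts -> d (act t x0) x0 <= kappa0 /\ 30 * kappa0 < gp (act t y) z x0) ->
  (size ts <= (Num.trunc (2 * (2 * kappa0) / (10 * delta))).+1 * N0)%N.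
Proof.
move=> g0 gl giso hdk hlam hu hts.
have hd : 0 < delta := Hd.
case: ts hu hts => [|t0 ts'] // hu hts.
have [ht0a ht0b] := hts t0 (mem_head _ _).
have -> : size (t0 :: ts') = size [seq mul (inv t0) t | t <- t0 :: ts'] by rewrite size_map.
apply: (@bin_bound x0 y gam (2 * kappa0) (30 * kappa0 - delta - kappa0) g0 gl giso).
- lra.
- rewrite /r2 /r1 /Dd; lra.
- rewrite /r2 /r1 /Dd; lra.
- rewrite /Dd; lra.
- by rewrite map_inj_uniq //; apply: mul_canl.
move=> g /mapP[t ht ->]; have [hta htb] := hts t ht.
split.
  rewrite act_mul.
  have := dact (inv t0) (act t x0) (act t0 x0); rewrite act_invK => ->.
  have := dtri Hm (act t x0) x0 (act t0 x0); have := dsym Hm x0 (act t0 x0); lra.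
rewrite act_mul.
have -> : gp (act (inv t0) (act t y)) y x0 = gp (act t y) (act t0 y) (act t0 x0).
  by rewrite -[RHS](gp_act (inv t0)) !act_invK.
have h1 := gp_base (act t y) (act t0 y) x0 (act t0 x0).
have h2 : 30 * kappa0 <= gp (act t y) z x0 by apply: ltW.
have h3 : 30 * kappa0 <= gp z (act t0 y) x0 by rewrite gp_sym; apply: ltW.
have := hypmin Hh h2 h3.
have := dsym Hm x0 (act t0 x0); lra.
Qed.

Lemma gp_pt p q q' x : gp p q x <= gp p q' x + d q q'.
Proof.
rewrite !gpE; have := dtri Hm q q' x; have := dtri Hm p q q'; lra.
Qed.

Lemma gp_swap a b x : gp a b x + gp x b a = d a x.
Proof. rewrite !gpE; have := dsym Hm x a; have := dsym Hm b a; have := dsym Hm b x; lra. Qed.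

Section PingPong.
Variables (x0 : X) (s : G) (Tp : seq G) (Rr : R).
Let y := act s x0.
Hypothesis hT1 : forall t, t \in Tp -> d (act t x0) x0 <= kappa0.
Hypothesis hT2 : forall t, t \in Tp -> gp (act t y) (act (inv s) x0) x0 <= Rr.
Hypothesis hT3 : forall t t', t \in Tp -> t' \in Tp -> t != t' ->
  gp (act t y) (act t' y) x0 <= Rr.
Hypothesis hRr : 0 <= Rr.
Hypothesis hk : 0 <= kappa0.
Hypothesis hlam : 2 * Rr + 2 * delta + 3 * kappa0 < d x0 y.

Definition Wd (ts : seq G) := foldr (fun t w => mul t (mul s w)) one ts.

Lemma pp_step t V : t \in Tp ->
  gp (act V x0) (act (inv s) (act (inv t) x0)) x0 <= Rr + delta + kappa0 ->
  d x0 y - (Rr + delta + 2 * kappa0) <= gp (act (mul t (mul s V)) x0) (act t y) x0.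
Proof.
move=> ht hA.
set u := act (inv s) (act (inv t) x0).
have hsw := gp_swap u (act V x0) x0.
have E1 : act (mul t s) u = x0 by rewrite act_mul /u !act_Kinv.
have E2 : act (mul t s) x0 = act t y by rewrite act_mul.
have E3 : act (mul t s) (act V x0) = act (mul t (mul s V)) x0 by rewrite !act_mul.
have key := gp_act (mul t s) x0 (act V x0) u.
rewrite E1 E2 E3 in key.
have dd : d u x0 = d x0 (act t y) by rewrite -(dact (mul t s)) E1 E2.
have := dtri Hm (act t x0) x0 (act t y); rewrite dact => h1.
have h2 := hT1 t ht.
have := gp_sym (act V x0) u x0.
have := gp_sym (act (mul t (mul s V)) x0) (act t y) x0.
lra.
Qed.

Lemma pp_inv t ts : t \in Tp -> all (mem Tp) ts ->
  d x0 y - (Rr + delta + 2 * kappa0) <= gp (act (Wd (t :: ts)) x0) (act t y) x0.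
Proof.
have hd : 0 < delta := Hd.
have hRr' : 0 <= Rr := hRr.
have hk' : 0 <= kappa0 := hk.
have hlam' : 2 * Rr + 2 * delta + 3 * kappa0 < d x0 y := hlam.
elim: ts t => [|t' ts IH] t ht hall; apply: pp_step => //.
  have h0 : d x0 x0 = 0 := dxx Hm x0.
  rewrite /= act_one gpE; have := dsym Hm x0 (act (inv s) (act (inv t) x0)); lra.
case/andP: hall => ht' hall.
have hI := IH t' ht' hall.
set V := Wd (t' :: ts) in hI *.
change (gp (act V x0) (act (inv s) (act (inv t) x0)) x0 <= Rr + delta + kappa0).
set w := act (inv s) x0.
have hw : gp (act V x0) w x0 <= Rr + delta.
  rewrite leNgt; apply/negP => hc.
  set m := Num.min (d x0 y - (Rr + delta + 2 * kappa0)) (gp (act V x0) w x0).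
  have m1 : m <= gp (act t' y) (act V x0) x0 by rewrite gp_sym /m ge_min hI.
  have m2 : m <= gp (act V x0) w x0 by rewrite /m ge_min lexx orbT.
  have m3 : Rr + delta < m by rewrite /m lt_min hc andbT; lra.
  have := hypmin Hh m1 m2; have := hT2 t' ht'; rewrite -/w; lra.
have := gp_pt (act V x0) (act (inv s) (act (inv t) x0)) w x0.
rewrite /w dact; move: hw; rewrite /w => hw.
have := dact t (act (inv t) x0) x0; rewrite act_Kinv => <-.
have := hT1 t ht; have := dsym Hm x0 (act t x0); lra.
Qed.

Lemma pp_inj a b : all (mem Tp) a -> all (mem Tp) b -> size a = size b ->
  Wd a = Wd b -> a = b.
Proof.
have hd : 0 < delta := Hd.
have hRr' : 0 <= Rr := hRr.
have hk' : 0 <= kappa0 := hk.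
have hlam' : 2 * Rr + 2 * delta + 3 * kappa0 < d x0 y := hlam.
elim: a b => [|t a IH] [|t' b] //= /andP[ht ha] /andP[ht' hb] [hs] hW.
have e : t = t'.
  apply/eqP; apply: contraT => hne.
  have h1 := pp_inv t a ht ha.
  have h2 := pp_inv t' b ht' hb.
  rewrite /= hW in h1.
  rewrite /= in h2.
  rewrite gp_sym in h1.
  have := hypmin Hh h1 h2.
  have := hT3 t t' ht ht' hne; lra.
subst t'; congr (_ :: _); apply: IH => //.
by apply: (mul_canl s); apply: (mul_canl t).
Qed.

End PingPong.

Lemma mem_pow (U : seq G) u g n : u \in U -> g \in powseq mul one U n ->
  mul u g \in powseq mul one U n.+1.
Proof. by move=> hu hg; rewrite /= mem_undup; apply/allpairsP; exists (u, g). Qed.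

Fixpoint Wp (s : G) (l : seq G) : G :=
  if l is t :: l' then (if l' is [::] then t else mul t (mul s (Wp s l'))) else one.

Lemma Wp_Wd s l : l != [::] -> mul (Wp s l) s = Wd s l.
Proof.
elim: l => [|t l IH] // _; case: l IH => [|t' l] IH /=; first by rewrite mulg1.
by rewrite -mulA -mulA IH.
Qed.

Lemma Wp_mem (U : seq G) s l : s \in U -> l != [::] -> all (mem U) l ->
  Wp s l \in powseq mul one U (2 * size l).-1.
Proof.
move=> hs; elim: l => [|t l IH] // _ /andP[ht hl].
case: l IH hl => [|t' l] IH hl.
  change (t \in powseq mul one U 1); rewrite -[t]mulg1; apply: mem_pow => //; exact: mem_head.
change (mul t (mul s (Wp s (t' :: l))) \in powseq mul one U (2 * (size l).+2).-1).
have -> : (2 * (size l).+2).-1 = ((2 * (size (t' :: l))).-1).+2 by rewrite /=; lia.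
apply: mem_pow => //; apply: mem_pow => //; exact: IH.
Qed.

Fixpoint tup (A : seq G) (k : nat) : seq (seq G) :=
  if k is k'.+1 then [seq x :: w | x <- A, w <- tup A k'] else [:: [::]].

Lemma size_tup A k : size (tup A k) = (size A ^ k)%N.
Proof. by elim: k => [|k IH] //=; rewrite size_allpairs IH expnS. Qed.

Lemma uniq_tup A k : uniq A -> uniq (tup A k).
Proof.
move=> hA; elim: k => [|k IH] //=.
apply: allpairs_uniq => //.
by move=> [a b] [a' b'] _ _ /= [-> ->].
Qed.

Lemma mem_tup A k w : w \in tup A k -> size w = k /\ all (mem A) w.
Proof.
elim: k w => [|k IH] w /=; first by rewrite inE => /eqP ->.
case/allpairsP => [[x w'] [hx hw' ->]] /=.
by have [-> ->] := IH _ hw'; rewrite andbT.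
Qed.

Lemma count_words (U Tp : seq G) s k :
  s \in U -> {subset Tp <= U} -> uniq Tp -> (1 <= k)%N ->
  (forall a b, all (mem Tp) a -> all (mem Tp) b -> size a = size b ->
     Wd s a = Wd s b -> a = b) ->
  (size Tp ^ k <= size (powseq mul one U (2 * k).-1))%N /\
  (size Tp ^ k <= size (powseq mul one U (2 * k)))%N.
Proof.
move=> hs hsub hu hk hinj.
have hne : forall w, w \in tup Tp k -> w != [::].
  by move=> w /mem_tup [hw _]; apply/eqP => e; move: hw hk; rewrite e => <-.
have hallU : forall w, w \in tup Tp k -> all (mem U) w.
  move=> w /mem_tup [_ /allP h]; apply/allP => x /h; exact: hsub.
have hWinj : {in tup Tp k &, injective (Wp s)}.
  move=> a b ha hb e.
  have [sa aa] := mem_tup _ _ _ ha; have [sb ab] := mem_tup _ _ _ hb.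
  apply: hinj => //; first by rewrite sa sb.
  by rewrite -!Wp_Wd ?hne // e.
split.
  rewrite -size_tup -(size_map (Wp s)).
  apply: uniq_leq_size; first by rewrite map_inj_in_uniq // uniq_tup.
  move=> g /mapP[w hw ->].
  have [sw _] := mem_tup _ _ _ hw.
  by rewrite -sw; apply: Wp_mem => //; [exact: hne | exact: hallU].
rewrite -size_tup -(size_map (fun w => mul s (Wp s w))).
apply: uniq_leq_size.
  rewrite map_inj_in_uniq ?uniq_tup // => a b ha hb e.
  by apply: hWinj => //; apply: (mul_canl s).
move=> g /mapP[w hw ->].
have [sw _] := mem_tup _ _ _ hw.
have -> : (2 * k)%N = ((2 * k).-1).+1 by rewrite prednK // muln_gt0 hk.
apply: mem_pow => //; rewrite -sw; apply: Wp_mem => //; [exact: hne | exact: hallU].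
Qed.

Lemma pow_nonempty (U : seq G) s n : s \in U -> (0 < size (powseq mul one U n))%N.
Proof.
move=> hs; have : exists g, g \in powseq mul one U n.
  elim: n => [|n [g hg]]; first by exists one; rewrite inE.
  by exists (mul s g); apply: mem_pow.
by case=> g; case: (powseq _ _ _ _).
Qed.

Lemma main_sec (U : seq G) (x0 : X) (n : nat) :
  is_geodesic d -> delta <= kappa0 -> (1 <= N0)%N -> uniq U ->
  (size U)%:R / 4 <= (size [seq u <- U | d (act u x0) x0 <= kappa0])%:R :> R ->
  10 ^+ 4 * kappa0 <= lambda0 d act U x0 -> (1 <= n)%N ->
  ((1 / 10 ^+ 6) * ((delta / N0%:R) / kappa0) / 4 * (size U)%:R) ^+ (n.+1)./2
    <= (size (powseq mul one U n))%:R.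
Proof.
move=> Hgeo hdk hN hu hU1r hlam0 hn.
have hd : 0 < delta := Hd.
have hk0 : 0 < kappa0 by lra.
have [h104 hK] := t10 R.
have [s hsU hs] : exists2 s, s \in U & 10 ^+ 4 * kappa0 <= d (act s x0) x0.
  apply: bigmax_witness hlam0; apply: mulr_gt0 => //; lra.
set y := act s x0.
have hlam : 100 * kappa0 <= d x0 y.
  rewrite (dsym Hm x0 y); apply: le_trans hs; rewrite ler_pM2r //.
have [gam [g0 gl giso]] := Hgeo x0 y.
set U1 := [seq u <- U | d (act u x0) x0 <= kappa0] in hU1r *.
set M := ((Num.trunc (2 * (2 * kappa0) / (10 * delta))).+1 * N0)%N.
have hU1 : forall t, t \in U1 -> t \in U /\ d (act t x0) x0 <= kappa0.
  by move=> t; rewrite mem_filter => /andP[].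
have hself : forall t, t \in U1 -> 30 * kappa0 < gp (act t y) (act t y) x0.
  move=> t /hU1 [_ ht].
  have h0 : d (act t y) (act t y) = 0 := dxx Hm _.
  have := dtri Hm (act t y) x0 (act t x0); rewrite dact.
  have := dsym Hm x0 (act t x0); have := dsym Hm x0 y.
  rewrite gpE; lra.
set L0 := [seq t <- U1 | gp (act t y) (act (inv s) x0) x0 <= 30 * kappa0].
have hL0 : (size U1 <= size L0 + M)%N.
  have := count_predC (fun t => gp (act t y) (act (inv s) x0) x0 <= 30 * kappa0) U1.
  rewrite -!size_filter => <-; rewrite leq_add2l.
  apply: (dir_bound x0 y (act (inv s) x0) gam _ g0 gl giso hdk hlam).
    by rewrite filter_uniq // filter_uniq.
  move=> t; rewrite mem_filter /= -ltNge => /andP[h1 /hU1 [_ h2]]; split => //.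
pose conf := fun a b : G => (a == b) || (30 * kappa0 < gp (act a y) (act b y) x0).
have csym : forall a b, conf a b = conf b a.
  by move=> a b; rewrite /conf eq_sym gp_sym.
have crefl : forall a, conf a a by move=> a; rewrite /conf eqxx.
have hb : forall x, x \in L0 -> (size (filter (conf x) L0) <= M)%N.
  move=> x hx; apply: (dir_bound x0 y (act x y) gam _ g0 gl giso hdk hlam).
  - by rewrite filter_uniq // filter_uniq // filter_uniq.
  move=> t; rewrite mem_filter => /andP[/orP[/eqP <- | hc] ht].
    have hx1 : x \in U1 by move: hx; rewrite mem_filter => /andP[].
    by have [_ ?] := hU1 x hx1; split => //; apply: hself.
  have ht1 : t \in U1 by move: ht; rewrite mem_filter => /andP[].
  by have [_ ?] := hU1 t ht1; split => //; rewrite gp_sym.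
have [T' [u1 u2 u3 u4]] := @greedy G conf M L0
  (filter_uniq _ (filter_uniq _ hu)) csym crefl hb.
have hT1 : forall t, t \in T' -> d (act t x0) x0 <= kappa0.
  by move=> t /u2; rewrite mem_filter => /andP[_ /hU1 [_ h]].
have hT2 : forall t, t \in T' ->
    gp (act t (act s x0)) (act (inv s) x0) x0 <= 30 * kappa0.
  by move=> t /u2; rewrite mem_filter => /andP[h _].
have hT3 : forall t t', t \in T' -> t' \in T' -> t != t' ->
    gp (act t (act s x0)) (act t' (act s x0)) x0 <= 30 * kappa0.
  move=> t t' ht ht' hne; have := u3 t t' ht ht' hne.
  by rewrite /conf negb_or => /andP[_]; rewrite -leNgt.
have hRr : 0 <= 30 * kappa0 by lra.
have hk : 0 <= kappa0 by lra.
have hlam2 : 2 * (30 * kappa0) + 2 * delta + 3 * kappa0 < d x0 y by lra.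
have hinj := pp_inj x0 s T' (30 * kappa0) hT1 hT2 hT3 hRr hk hlam2.
have hsub : {subset T' <= U}.
  by move=> t /u2; rewrite mem_filter => /andP[_ /hU1 []].
have [ko ke] := khalf n.
set k := (n.+1)./2 in ko ke *.
have hk1 : (1 <= k)%N by rewrite /k; apply: khalf1.
have [c1 c2] := count_words U T' s k hsU hsub u1 hk1 hinj.
have hpow : (size T' ^ k <= size (powseq mul one U n))%N.
  case ho: (odd n).
    by have e := ko ho; rewrite [X in powseq _ _ _ X]e.
  by have e := ke (negbT ho); rewrite [X in powseq _ _ _ X]e.
have hU1n : (size U1 <= M + size T' * M)%N.
  by rewrite addnC; apply: leq_trans hL0 _; rewrite leq_add2r.
have hU1R : (size U1)%:R <= M%:R + (size T')%:R * M%:R :> R.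
  by rewrite -natrM -natrD ler_nat.
have hq0 : 0 <= 2 * (2 * kappa0) / (10 * delta).
  by apply: divr_ge0; lra.
have hM : M%:R <= (2 * (2 * kappa0) / (10 * delta) + 1) * N0%:R :> R.
  rewrite /M natrM -natr1; apply: ler_wpM2r; first by rewrite ler0n.
  by rewrite lerD2r truncn_le.
have hUr : 0 <= (size U)%:R :> R by rewrite ler0n.
have hMr : 0 <= M%:R :> R by rewrite ler0n.
have [hb0 [hb1 | hTb]] := @final_arith R delta kappa0 N0 _ _ _ _ hd hdk hN hUr hU1r hU1R hMr hM.
  apply: le_trans (exprn_ile1 _ hb0 hb1) _.
  by rewrite ler1n; exact: (pow_nonempty U s n hsU).
apply: le_trans (lerXn2r k _ _ hTb) _.
- by rewrite nnegrE.
- by rewrite nnegrE ler0n.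
by rewrite -natrX ler_nat.
Qed.


End Act.

Theorem proposition5p5 (R : realType) (G : eqType) (X : Type)
  (mul : G -> G -> G) (one : G) (inv : G -> G)
  (d : X -> X -> R) (act : G -> X -> X)
  (delta kappa0 : R) (N0 : nat) :
  is_group mul one inv ->
  is_metric d -> is_geodesic d -> 0 < delta -> is_hyperbolic d delta ->
  is_isometric_action mul one d act ->
  (1 <= N0)%N -> is_acylindrical d act delta kappa0 N0 ->
  delta <= kappa0 ->
  let rho0 := delta / N0%:R in
  let c := (1 / 10 ^+ 6) * (rho0 / kappa0) in
  forall (U : seq G) (x0 : X), uniq U ->
  avg_disp d act U x0 <= energy d act U + delta ->
  let U1 := [seq u <- U | d (act u x0) x0 <= kappa0] in
  (size U)%:R / 4 <= (size U1)%:R :> R ->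
  10 ^+ 4 * kappa0 <= lambda0 d act U x0 ->
  forall n : nat, (1 <= n)%N ->
    (c / 4 * (size U)%:R) ^+ (n.+1)./2 <= (size (powseq mul one U n))%:R.
Proof.
move=> Hg Hm Hgeo Hd Hh Ha HN Hac Hdk rho0 c U x0 hu _ U1 hU1 hlam n hn.
exact: (@main_sec R G X mul one inv d act delta kappa0 N0 Hg Hm Hh Hd Ha Hac
  U x0 n Hgeo Hdk HN hu hU1 hlam hn).
Qed.
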